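(* Let $T=(\vec G,G,\prec,A)$ be a twisted graph, simplicial on $F$, with edge set $E=F\sqcup\{x_1,x_2,x_3\}$ where $x_1\prec x_2\prec x_3$, and let $C$ be either $(\{x_1,x_3\},\{x_2\})$ or its opposite $(\{x_2\},\{x_1,x_3\})$. Fix orderings of the rows and columns of $\Sigma(T)$. Then there is a sign $\sigma_C\in\{1,-1\}$ such that, for every $\boldsymbol\theta$ respecting $\prec$, the system of strict inequalities $\widehat a\cdot\mathbf r>0$ ($a\in A$) together with $\widehat C\cdot\mathbf r>0$, in the unknown $\mathbf r\in\mathbb{R}^E$, is soluble if and only if the sign of the determinant of the square submatrix of $\Sigma(T)$ on the columns $F\cup\{x_1\}$ equals $\sigma_C$. Moreover $\sigma_{-C}=-\sigma_C$.
   Context: Signed sets on a finite set $E$: pairs $X=(X^+,X^-)$ of disjoint subsets, $X(e)=+1,-1,0$ according as $e\in X^+$, $e\in X^-$, or neither; support $\underline X=X^+\cup X^-$; $-X=(X^-,X^+)$. Conformal: no $e$ with $X(e)=-Y(e)\ne0$; composition $(X\circ Y)(e)=X(e)$ if $X(e)\ne0$, else $Y(e)$. For a total order $<$ on $E$, $\mathcal C(<)=\{(\{e_1,e_3\},\{e_2\}),(\{e_2\},\{e_1,e_3\}):e_1<e_2<e_3\}$ (circuits of the rank 2 oriented matroid $\mathcal M(<)$; vectors are compositions of pairwise conformal families of circuits); for a partial order $\prec$, $\mathcal C(\prec)=\bigcap_{<\supseteq\prec}\mathcal C(<)$. For a directed graph $\vec G=(V,\vec E)$ (no loops, parallel or antiparallel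 edges), underlying simple graph $G=(V,E)$, a strong map $\mathcal M^*(\vec G)\to\mathcal M(<)$ means every signed minimal cut $(\{(u,w):u\in S,w\notin S\},\{(u,w):w\in S,u\notin S\})$ ($S$, $V\setminus S$ inducing connected subgraphs) is a vector of $\mathcal M(<)$; $C^*_v=(\{(u,v)\in\vec E\},\{(v,u)\in\vec E\})$. A twisted graph $T=(\vec G,G,\prec,A)$: $\prec$ a partial order on $E$, $G$ three-edge-connected, $A\subset\mathcal C(\prec)$, a strong map $\mathcal M^*(\vec G)\to\mathcal M(<)$ for every total $<\supseteq\prec$, and a partition $A=\bigsqcup_v A_v$ with members of $A_v$ pairwise conformal and composing to $C^*_v$. $\boldsymbol\theta\in\mathbb{R}^E$ respects $\prec$ if $0<\theta_e<180$ (degrees) and $\theta_e<\theta_f$ whenever $e\prec f$. For a signed set $c$ with $|\underline c|=3$ whose support elements needed below are $\prec$-comparable, $\widehat c\in\mathbb{R}^E$ has $\widehat c(e)=0$ for $e\notin\underline c$ and $\widehat c(e)=c(e)\sin(\theta_{e''}-\theta_{e'})$ if $\underline c=\{e,e',e''\}$ with $e'\prec e''$; $\Sigma(T)$ is the $|A|\times|E|$ matrix with rows $\widehat a$, $a\in A$. A matrix with $r+1$ rows and $r$ columns is a simplex if its rows have a linear dependency with all coefficients positive and every row dependency is a multiple of it. $T$ is simplicial on $F$ if for every $\boldsymbol\theta$ respecting $\prec$ the submatrix of $\Sigma(T)$ on columns $F$ is a simplex (so $|F|=|A|-1$ and the submatrix on $F\cup\{x_1\}$ is square). *)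

(* Defs.v *)
From HB Require Import structures.
From mathcomp Require Import all_boot all_order all_algebra.
From mathcomp Require Import reals trigo.

Set Implicit Arguments.
Unset Strict Implicit.
Unset Printing Implicit Defensive.

Import Order.TTheory GRing.Theory Num.Theory.
Local Open Scope ring_scope.

Section Twisted.
Variable E : finType.

(** Signed sets on E: pairs (X^+, X^-) (disjointness is part of each use). *)
Definition signed := ({set E} * {set E})%type.

Definition supp (X : signed) : {set E} := X.1 :|: X.2.
Definition sopp (X : signed) : signed := (X.2, X.1).
Definition szero : signed := (set0, set0).

Definition sval (R : numDomainType) (X : signed) (e : E) : R :=
  if e \in X.1 then 1 else if e \in X.2 then -1 else 0.

Definition conformal (X Y : signed) : bool :=
  [disjoint X.1 & Y.2] && [disjoint X.2 & Y.1].

Definition comp (X Y : signed) : signed :=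
  (X.1 :|: (Y.1 :\: supp X), X.2 :|: (Y.2 :\: supp X)).

Definition pairwise_conformal (s : seq signed) : Prop :=
  forall X Y, X \in s -> Y \in s -> conformal X Y.

Definition compose_seq (s : seq signed) : signed := foldr comp szero s.

Definition strict_porder (prec : rel E) : Prop :=
  irreflexive prec /\ transitive prec.

Definition total_ext (prec lt : rel E) : Prop :=
  [/\ irreflexive lt, transitive lt,
      (forall e f, e != f -> lt e f || lt f e)
    & (forall e f, prec e f -> lt e f)].

(** circuits C(<) of the rank 2 oriented matroid M(<) *)
Definition circuit_lin (lt : rel E) (X : signed) : Prop :=
  exists e1 e2 e3, [/\ lt e1 e2, lt e2 e3 &
     X = ([set e1; e3], [set e2]) \/ X = ([set e2], [set e1; e3])].

Definition circuit_po (prec : rel E) (X : signed) : Prop :=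
  forall lt, total_ext prec lt -> circuit_lin lt X.

Definition vector_lin (lt : rel E) (X : signed) : Prop :=
  exists s : seq signed,
    [/\ forall Y, Y \in s -> circuit_lin lt Y, pairwise_conformal s
      & X = compose_seq s].

Variable V : finType.

(** directed graph given by tail/head maps; no loops, no parallel or
    antiparallel edges *)
Definition digraph (tail head : E -> V) : Prop :=
  (forall e, tail e != head e) /\
  (forall e f, [set tail e; head e] = [set tail f; head f] -> e = f).

Definition adj_in (tail head : E -> V) (D : {set E}) (S : {set V}) : rel V :=
  fun u w => [&& u \in S, w \in S &
     [exists e, (e \notin D) &&
        (((tail e == u) && (head e == w)) || ((tail e == w) && (head e == u)))]].

Definition connected_in (tail head : E -> V) (D : {set E}) (S : {set V}) : Prop :=
  forall u w, u \in S -> w \in S -> connect (adj_in tail head D S) u w.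

Definition three_edge_connected (tail head : E -> V) : Prop :=
  forall D : {set E}, (#|D| <= 2)%N -> connected_in tail head D [set: V].

Definition signed_cut (tail head : E -> V) (S : {set V}) : signed :=
  ([set e | (tail e \in S) && (head e \notin S)],
   [set e | (head e \in S) && (tail e \notin S)]).

Definition minimal_cut_set (tail head : E -> V) (S : {set V}) : Prop :=
  [/\ S != set0, S != [set: V], connected_in tail head set0 S
    & connected_in tail head set0 (~: S)].

Definition strong_map (tail head : E -> V) (lt : rel E) : Prop :=
  forall S, minimal_cut_set tail head S -> vector_lin lt (signed_cut tail head S).

Definition vertex_cocircuit (tail head : E -> V) (v : V) : signed :=
  ([set e | head e == v], [set e | tail e == v]).

(** twisted graph T = (G->, G, prec, A); the partition A = \bigsqcup_v A_v is
    given by part : signed -> V with A_v = [set a in A | part a == v]. *)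
Definition twisted_graph (tail head : E -> V) (prec : rel E)
    (A : {set signed}) (part : signed -> V) : Prop :=
  [/\ digraph tail head /\ strict_porder prec,
      three_edge_connected tail head,
      (forall a, a \in A -> circuit_po prec a),
      (forall lt, total_ext prec lt -> strong_map tail head lt)
    & (forall v,
        let Av := enum [set a in A | part a == v] in
        pairwise_conformal Av /\ compose_seq Av = vertex_cocircuit tail head v)].

Variable R : realType.

(** angles in degrees *)
Definition sind (x : R) : R := sin (x * pi / 180%:R).

Definition respects (prec : rel E) (theta : E -> R) : Prop :=
  (forall e, 0 < theta e < 180%:R) /\
  (forall e f, prec e f -> theta e < theta f).

(** \hat c(e) = c(e) sin(theta_{e''} - theta_{e'}) where supp c = {e,e',e''}
    and e' prec e''; written as a sum over the ordered pairs (e',e'') of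
    elements of supp c \ {e} with e' prec e'' (exactly one such pair when
    e' and e'' are comparable). 0 outside the support. *)
Definition hat (prec : rel E) (theta : E -> R) (c : signed) (e : E) : R :=
  if e \in supp c then
    sval R c e * \sum_(f in supp c :\ e) \sum_(g in supp c :\ e | prec f g)
                   sind (theta g - theta f)
  else 0.

Definition dotE (u r : E -> R) : R := \sum_e u e * r e.

Definition simplex_on (rows : {set signed}) (F : {set E})
    (M : signed -> E -> R) : Prop :=
  #|rows| = (#|F| + 1)%N /\
  exists lam : signed -> R,
    [/\ (forall a, a \in rows -> 0 < lam a),
        (forall f, f \in F -> \sum_(a in rows) lam a * M a f = 0)
      & (forall mu : signed -> R,
          (forall f, f \in F -> \sum_(a in rows) mu a * M a f = 0) ->
          exists t : R, forall a, a \in rows -> mu a = t * lam a)].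

Definition simplicial (prec : rel E) (A : {set signed}) (F : {set E}) : Prop :=
  forall theta, respects prec theta -> simplex_on A F (hat prec theta).

Definition soluble (prec : rel E) (theta : E -> R) (A : {set signed})
    (C : signed) : Prop :=
  exists r : E -> R,
    (forall a, a \in A -> 0 < dotE (hat prec theta a) r) /\
    0 < dotE (hat prec theta C) r.

(** Given orderings sA of the rows (= A) and sE of the columns (= E) of
    Sigma(T), the square submatrix on the columns F \cup {x1}, with columns
    in the order induced by sE. *)
Definition subdet (prec : rel E) (theta : E -> R) (A : {set signed})
    (sA : seq signed) (sE : seq E) (F : {set E}) (x1 : E) : R :=
  let cols := [seq e <- sE | e \in x1 |: F] in
  \det (\matrix_(i < #|A|, j < #|A|)
          hat prec theta (nth szero sA i) (nth x1 cols j)).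

End Twisted.

(* Main.v *)
Require Import Defs.
From HB Require Import structures.
From mathcomp Require Import all_boot all_order all_algebra.
From mathcomp Require Import reals trigo.
Set Implicit Arguments. Unset Strict Implicit. Unset Printing Implicit Defensive.
Import Order.TTheory GRing.Theory Num.Theory.

Section Ext.
Variable E : finType.
Variable prec : rel E.
Hypothesis sp : strict_porder prec.

Definition npred (x : E) := #|[set y | prec y x]|.
Definition BB := #|E|.+1.
Definition key (U : {set E}) (x : E) : nat :=
  (((x \in U) : nat) * BB + npred x) * BB + enum_rank x.
Definition ltU U : rel E := fun x y => key U x < key U y.

Lemma npred_lt x : npred x < BB.
Proof. by rewrite /npred /BB ltnS max_card. Qed.
Lemma rk_lt (x : E) : (enum_rank x : nat) < BB.
Proof. by rewrite /BB ltnS ltnW // -cardE ltn_ord. Qed.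

Lemma npred_mono x y : prec x y -> npred x < npred y.
Proof.
case: sp => irr tr pxy; apply: proper_card; apply/properP; split.
  apply/subsetP => z; rewrite !inE => pzx; exact: tr pzx pxy.
by exists x; rewrite !inE // irr.
Qed.

Definition upset (U : {set E}) := forall x y, prec x y -> x \in U -> y \in U.

Lemma key_inj U : injective (key U).
Proof.
move=> x y; rewrite /key => h.
have := congr1 (modn^~ BB) h; rewrite !modnMDl !modn_small ?rk_lt //.
by move/val_inj/enum_rank_inj.
Qed.

Lemma ltU_ext U : upset U -> total_ext prec (ltU U).
Proof.
move=> hU; split.
- by move=> x; rewrite /ltU ltnn.
- by move=> x y z; rewrite /ltU; apply: ltn_trans.
- move=> e f nef; rewrite /ltU; case: (ltngtP (key U e) (key U f)) => //.
  by move/key_inj => ef; rewrite ef eqxx in nef.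
- move=> e f pef; rewrite /ltU /key.
  have h1 := npred_mono pef; have h2 := npred_lt e; have h3 := npred_lt f.
  have h4 := rk_lt e; have h5 := rk_lt f.
  have hu : ((e \in U) : nat) <= ((f \in U) : nat).
    by case: (boolP (e \in U)) => // /(hU _ _ pef) ->.
  set a := ((e \in U) : nat) in hu *; set b := ((f \in U) : nat) in hu *.
  set p := npred e in h1 h2 *; set q := npred f in h1 h3 *.
  set r := (enum_rank e : nat) in h4 *; set s := (enum_rank f : nat) in h5 *.
  have : a * BB + p < b * BB + q.
    case: (ltnP a b) => hab.
      apply: (@leq_trans (b * BB)); last exact: leq_addr.
      apply: (@leq_trans ((a.+1) * BB)); last by rewrite leq_mul2r hab orbT.
      by rewrite mulSnr ltn_add2l.
    have -> : a = b by apply/eqP; rewrite eqn_leq hu hab.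
    by rewrite ltn_add2l.
  move=> h.
  apply: (@leq_trans ((a * BB + p).+1 * BB)).
    by rewrite mulSnr ltn_add2l.
  by apply: leq_trans (leq_addr _ _); rewrite leq_mul2r h orbT.
Qed.

Lemma ltU_sep U x y : upset U -> x \notin U -> y \in U -> ltU U x y.
Proof.
move=> _ hx hy; rewrite /ltU /key (negbTE hx) hy /= mul0n add0n mul1n.
have h1 := npred_lt x; have h4 := rk_lt x.
apply: (@leq_trans (BB * BB)); last by rewrite mulnDl addnAC -addnA leq_addr.
apply: (@leq_trans ((npred x).+1 * BB)); first by rewrite mulSnr ltn_add2l.
by rewrite leq_mul2r h1 orbT.
Qed.

End Ext.

Section Betw.
Variable E : finType.
Variable prec : rel E.
Hypothesis sp : strict_porder prec.

Lemma ext_irr lt x y : total_ext prec lt -> lt x y -> lt y x -> False.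
Proof. by case=> irr tr _ _ h1 h2; have := tr _ _ _ h1 h2; rewrite irr. Qed.

Lemma betweenP p q r :
  (forall lt, total_ext prec lt -> (lt p q && lt q r) || (lt r q && lt q p)) ->
  (prec p q && prec q r) || (prec r q && prec q p).
Proof.
move=> H; case: (sp) => irr tr.
have up0 : upset prec set0 by move=> x y _; rewrite inE.
have e0 := ltU_ext sp up0.
have [npq nrq] : p != q /\ r != q.
  case/orP: (H _ e0) => /andP[h1 h2]; split; apply/eqP => e; subst;
    by [rewrite /ltU ltnn in h1 | rewrite /ltU ltnn in h2].
set U1 := [set x | ~~ ((x == q) || prec x q)].
have up1 : upset prec U1.
  move=> x y pxy; rewrite !inE; apply: contra => /orP[/eqP e | h].
    by rewrite -e pxy orbT.
  by rewrite (tr _ _ _ pxy h) orbT.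
have e1 := ltU_ext sp up1.
have A1 : prec p q || prec r q.
  case: (boolP (p \in U1)) => hp; case: (boolP (r \in U1)) => hr.
  - have q1 : q \notin U1 by rewrite inE eqxx.
    have l1 := ltU_sep up1 q1 hp; have l2 := ltU_sep up1 q1 hr.
    by case/orP: (H _ e1) => /andP[h1 h2]; [case: (ext_irr e1 h1 l1) | case: (ext_irr e1 h1 l2)].
  - by move: hr; rewrite inE negbK (negbTE nrq) /= => ->; rewrite orbT.
  - by move: hp; rewrite inE negbK (negbTE npq) /= => ->.
  - by move: hp; rewrite inE negbK (negbTE npq) /= => ->.
set U2 := [set x | (x == q) || prec q x].
have up2 : upset prec U2.
  move=> x y pxy; rewrite !inE => /orP[/eqP <- | h].
    by rewrite pxy orbT.
  by rewrite (tr _ _ _ h pxy) orbT.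
have e2 := ltU_ext sp up2.
have A2 : prec q p || prec q r.
  case: (boolP (p \in U2)) => hp; case: (boolP (r \in U2)) => hr.
  - by move: hp; rewrite inE (negbTE npq) /= => ->.
  - by move: hp; rewrite inE (negbTE npq) /= => ->.
  - by move: hr; rewrite inE (negbTE nrq) /= => ->; rewrite orbT.
  - have q1 : q \in U2 by rewrite inE eqxx.
    have l1 := ltU_sep up2 hp q1; have l2 := ltU_sep up2 hr q1.
    by case/orP: (H _ e2) => /andP[h1 h2]; [case: (ext_irr e2 h2 l2) | case: (ext_irr e2 h2 l1)].
case/orP: A1 => h1; case/orP: A2 => h2.
- by have := tr _ _ _ h1 h2; rewrite irr.
- by rewrite h1 h2.
- by rewrite h1 h2 orbT.
- by have := tr _ _ _ h1 h2; rewrite irr.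
Qed.

Lemma set2_eq1 (x y z : E) : [set x; y] = [set z] -> x = y.
Proof.
move=> h; have hx : x \in [set z] by rewrite -h !inE eqxx.
have hy : y \in [set z] by rewrite -h !inE eqxx orbT.
by move: hx hy; rewrite !inE => /eqP -> /eqP ->.
Qed.

Lemma set2_eq2 (x y z w : E) : x != y -> [set x; y] = [set z; w] ->
  (x = z /\ y = w) \/ (x = w /\ y = z).
Proof.
move=> nxy h; have hx : x \in [set z; w] by rewrite -h !inE eqxx.
have hy : y \in [set z; w] by rewrite -h !inE eqxx orbT.
move: hx hy; rewrite !inE => /orP[]/eqP ex /orP[]/eqP ey; subst.
- by rewrite eqxx in nxy.
- by left.
- by right.
- by rewrite eqxx in nxy.
Qed.

Lemma set1_inj (x y : E) : [set x] = [set y] -> x = y.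
Proof. move=> h; have : x \in [set y] by rewrite -h inE. by rewrite inE => /eqP. Qed.

Lemma circ_struct a : circuit_po prec a ->
  exists p q r, [/\ prec p q, prec q r &
    a = ([set p; r], [set q]) \/ a = ([set q], [set p; r])].
Proof.
move=> H; case: (sp) => irr tr.
have up0 : upset prec set0 by move=> x y _; rewrite inE.
have e0 := ltU_ext sp up0.
have [p [q [r [l1 l2 ha]]]] := H _ e0.
have npr : p != r.
  by apply/eqP => e; subst; case: (ext_irr e0 l1 l2).
have B : (prec p q && prec q r) || (prec r q && prec q p).
  apply: betweenP => lt ext.
  have [f1 [f2 [f3 [m1 m2 hb]]]] := H _ ext.
  have key : forall X Y : {set E}, X = [set p; r] -> Y = [set q] ->
     (X, Y) = ([set f1; f3], [set f2]) -> (lt p q && lt q r) || (lt r q && lt q p).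
    move=> X Y -> -> [] /(set2_eq2 npr) h /set1_inj e; rewrite -e in m1 m2.
    by case: h => [][-> ->]; rewrite m1 m2 ?orbT.
  case: ha hb => -> [] h.
  - exact: key h.
  - case: h => h1 _; have e := set2_eq1 h1; by rewrite e eqxx in npr.
  - case: h => _ h1; have e := set2_eq1 h1; by rewrite e eqxx in npr.
  - case: h => h1 h2; apply: (key [set p; r] [set q]) => //.
    by rewrite h1 h2.
case/orP: B => /andP[h1 h2].
  by exists p, q, r; split.
exists r, q, p; split => //.
by rewrite (setUC [set r]).
Qed.

End Betw.

From mathcomp Require Import ring lra.
Local Open Scope ring_scope.

Section Hat.
Variable R : realType.
Variable E : finType.
Variable prec : rel E.
Hypothesis sp : strict_porder prec.

Lemma sum_pair (G : E -> R) u v : u != v -> \sum_(f in [set u; v]) G f = G u + G v.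
Proof.
by move=> nuv; rewrite big_setU1 ?big_set1 // inE.
Qed.

Lemma dsum_pair (H : E -> E -> R) u v : u != v ->
  \sum_(f in [set u; v]) \sum_(g in [set u; v] | prec f g) H f g =
  (if prec u v then H u v else 0) + (if prec v u then H v u else 0).
Proof.
case: sp => irr _ nuv; rewrite sum_pair // !big_mkcondr /= !sum_pair // !irr.
by rewrite add0r addr0.
Qed.

Definition Kv (theta : E -> R) p q r (e : E) : R :=
  (e == p)%:R * sind (theta r - theta q) - (e == q)%:R * sind (theta r - theta p)
  + (e == r)%:R * sind (theta q - theta p).

Lemma hat_circ theta p q r e : prec p q -> prec q r ->
  hat prec theta ([set p; r], [set q]) e = Kv theta p q r e.
Proof.
case: sp => irr tr hpq hqr; have hpr := tr _ _ _ hpq hqr.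
have npq : p != q by apply: contraTneq hpq => ->; rewrite irr.
have nqr : q != r by apply: contraTneq hqr => ->; rewrite irr.
have npr : p != r by apply: contraTneq hpr => ->; rewrite irr.
have nqp : prec q p = false by apply/negP => h; have := tr _ _ _ h hpq; rewrite irr.
have nrq : prec r q = false by apply/negP => h; have := tr _ _ _ h hqr; rewrite irr.
have nrp : prec r p = false by apply/negP => h; have := tr _ _ _ h hpr; rewrite irr.
have F1 := negbTE npq; have F2 := negbTE nqr; have F3 := negbTE npr.
have F4 : (q == p) = false by rewrite eq_sym.
have F5 : (r == q) = false by rewrite eq_sym.
have F6 : (r == p) = false by rewrite eq_sym.
rewrite /hat /supp /Defs.sval /Kv /=.
have inS : (e \in [set p; r] :|: [set q]) = [|| e == p, e == q | e == r].
  by rewrite !inE; case: (e == p); case: (e == q); case: (e == r).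
rewrite inS.
case: (eqVneq e p) => [-> | nep].
  have -> : ([set p; r] :|: [set q]) :\ p = [set q; r].
    apply/setP => x; rewrite !inE; case: (eqVneq x p) => [->|] /=; rewrite ?eqxx ?F1 ?F2 ?F3 ?F4 ?F5 ?F6 //=;
      by case: (x == p); case: (x == q); case: (x == r).
  rewrite dsum_pair // hqr nrq /Defs.sval ?inE ?eqxx ?F1 ?F2 ?F3 ?F4 ?F5 ?F6 /= ?orbT /=; ring.
case: (eqVneq e q) => [-> | neq].
  have -> : ([set p; r] :|: [set q]) :\ q = [set p; r].
    apply/setP => x; rewrite !inE; case: (eqVneq x q) => [->|] /=; rewrite ?eqxx ?F1 ?F2 ?F3 ?F4 ?F5 ?F6 //=;
      by case: (x == p); case: (x == q); case: (x == r).
  rewrite dsum_pair // hpr nrp /Defs.sval ?inE ?eqxx ?F1 ?F2 ?F3 ?F4 ?F5 ?F6 /= ?orbT /=; ring.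
case: (eqVneq e r) => [-> | ner].
  have -> : ([set p; r] :|: [set q]) :\ r = [set p; q].
    apply/setP => x; rewrite !inE; case: (eqVneq x r) => [->|] /=; rewrite ?eqxx ?F1 ?F2 ?F3 ?F4 ?F5 ?F6 //=;
      by case: (x == p); case: (x == q); case: (x == r).
  rewrite dsum_pair // hpq nqp /Defs.sval ?inE ?eqxx ?F1 ?F2 ?F3 ?F4 ?F5 ?F6 /= ?orbT /=; ring.
by rewrite /= !mul0r subr0 addr0.
Qed.

Lemma sval_opp (X : signed E) e : [disjoint X.1 & X.2] ->
  Defs.sval R (sopp X) e = - Defs.sval R X e.
Proof.
move=> dis; rewrite /Defs.sval /sopp /=.
case: (boolP (e \in X.2)) => h2; case: (boolP (e \in X.1)) => h1 //.
- by have := disjointFr dis h1; rewrite h2.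
- by rewrite opprK.
- by rewrite oppr0.
Qed.

Lemma hat_opp (theta : E -> R) (X : signed E) e : [disjoint X.1 & X.2] ->
  hat prec theta (sopp X) e = - hat prec theta X e.
Proof.
move=> dis; rewrite /hat /supp /sopp /= setUC.
case: ifP => _; last by rewrite oppr0.
by rewrite (sval_opp _ dis) mulNr.
Qed.

End Hat.

Section Trig.
Variable R : realType.
Variable E : finType.

Definition phi (theta : E -> R) e := theta e * pi / 180%:R.

Lemma sind_phi (theta : E -> R) f g : sind (theta g - theta f) = sin (phi theta g - phi theta f).
Proof. by rewrite /sind /phi; congr sin; rewrite -!mulrA mulrBl. Qed.

Lemma sum_pt (G : E -> R) p : \sum_e (e == p)%:R * G e = G p.
Proof.
rewrite (bigD1 p) //= eqxx mul1r big1 ?addr0 // => e /negbTE ->.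
by rewrite mul0r.
Qed.

Lemma sum_3 (G : E -> R) (x1 x2 x3 : E) (W : E -> R) :
  x1 != x2 -> x2 != x3 -> x1 != x3 ->
  (forall e, e != x1 -> e != x2 -> e != x3 -> W e = 0) ->
  \sum_e W e * G e = W x1 * G x1 + W x2 * G x2 + W x3 * G x3.
Proof.
move=> n12 n23 n13 hW.
rewrite (eq_bigr (fun e => (e == x1)%:R * (W x1 * G x1) + (e == x2)%:R * (W x2 * G x2)
   + (e == x3)%:R * (W x3 * G x3))).
  by rewrite !big_split /= !sum_pt.
have f1 := negbTE n12; have f2 := negbTE n23; have f3 := negbTE n13.
have f4 : (x2 == x1) = false by rewrite eq_sym.
have f5 : (x3 == x2) = false by rewrite eq_sym.
have f6 : (x3 == x1) = false by rewrite eq_sym.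
move=> e _; case: (eqVneq e x1) => [->|e1].
  by rewrite ?eqxx ?f1 ?f2 ?f3 ?f4 ?f5 ?f6 /=; ring.
case: (eqVneq e x2) => [->|e2].
  by rewrite ?eqxx ?f1 ?f2 ?f3 ?f4 ?f5 ?f6 /=; ring.
case: (eqVneq e x3) => [->|e3].
  by rewrite ?eqxx ?f1 ?f2 ?f3 ?f4 ?f5 ?f6 /=; ring.
by rewrite hW // ?(negbTE e1) ?(negbTE e2) ?(negbTE e3) /=; ring.
Qed.

Lemma Kv_dot (theta : E -> R) p q r (g : E -> R) :
  \sum_e Kv theta p q r e * g e =
  sind (theta r - theta q) * g p - sind (theta r - theta p) * g q
  + sind (theta q - theta p) * g r.
Proof.
rewrite (eq_bigr (fun e => (e == p)%:R * (sind (theta r - theta q) * g e)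
   - (e == q)%:R * (sind (theta r - theta p) * g e)
   + (e == r)%:R * (sind (theta q - theta p) * g e))).
  by rewrite big_split /= sumrB !sum_pt.
by move=> e _; rewrite /Kv; ring.
Qed.

Lemma Kv_cos (theta : E -> R) p q r :
  \sum_e Kv theta p q r e * cos (phi theta e) = 0.
Proof. by rewrite Kv_dot !sind_phi !sinB; ring. Qed.

Lemma Kv_sin (theta : E -> R) p q r :
  \sum_e Kv theta p q r e * sin (phi theta e) = 0.
Proof. by rewrite Kv_dot !sind_phi !sinB; ring. Qed.

Lemma Wrel (theta : E -> R) (W : E -> R) x1 x2 x3 :
  x1 != x2 -> x2 != x3 -> x1 != x3 ->
  (forall e, e != x1 -> e != x2 -> e != x3 -> W e = 0) ->
  \sum_e W e * cos (phi theta e) = 0 ->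
  \sum_e W e * sin (phi theta e) = 0 ->
  sind (theta x3 - theta x2) * W x2 = - sind (theta x3 - theta x1) * W x1 /\
  sind (theta x3 - theta x2) * W x3 = sind (theta x2 - theta x1) * W x1.
Proof.
move=> n12 n23 n13 hW; rewrite !(sum_3 _ n12 n23 n13 hW) => hc hs.
rewrite !sind_phi !sinB.
set c1 := cos (phi theta x1) in hc hs *; set c2 := cos (phi theta x2) in hc hs *.
set c3 := cos (phi theta x3) in hc hs *; set s1 := sin (phi theta x1) in hc hs *.
set s2 := sin (phi theta x2) in hc hs *; set s3 := sin (phi theta x3) in hc hs *.
split.
  apply/eqP; rewrite -subr_eq0; apply/eqP.
  transitivity (s3 * (W x1 * c1 + W x2 * c2 + W x3 * c3) - c3 * (W x1 * s1 + W x2 * s2 + W x3 * s3)).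
    ring.
  by rewrite hc hs; ring.
apply/eqP; rewrite -subr_eq0; apply/eqP.
transitivity (c2 * (W x1 * s1 + W x2 * s2 + W x3 * s3) - s2 * (W x1 * c1 + W x2 * c2 + W x3 * c3)).
  ring.
by rewrite hc hs; ring.
Qed.

End Trig.

Section Lin.
Variables (R : realType) (E : finType) (prec : rel E) (A : {set signed E})
  (F : {set E}) (x1 : E) (sA : seq (signed E)) (sE : seq E).
Hypotheses (hsA : perm_eq sA (enum A)) (hsE : perm_eq sE (enum E))
  (x1F : x1 \notin F) (hcard : #|A| = (#|F| + 1)%N).

Local Notation n := #|A|.
Definition cols := [seq e <- sE | e \in x1 |: F].

Lemma size_sA : size sA = n.
Proof. by rewrite (perm_size hsA) -cardE. Qed.
Lemma uniq_sA : uniq sA.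
Proof. by rewrite (perm_uniq hsA) enum_uniq. Qed.
Lemma mem_sA a : (a \in sA) = (a \in A).
Proof. by rewrite (perm_mem hsA) mem_enum. Qed.
Lemma mem_cols e : (e \in cols) = (e \in x1 |: F).
Proof. by rewrite mem_filter (perm_mem hsE) mem_enum andbT. Qed.
Lemma uniq_cols : uniq cols.
Proof. by rewrite filter_uniq // (perm_uniq hsE) enum_uniq. Qed.
Lemma perm_cols : perm_eq cols (enum (x1 |: F)).
Proof. by apply: uniq_perm; rewrite ?uniq_cols ?enum_uniq // => e; rewrite mem_cols mem_enum. Qed.
Lemma size_cols : size cols = n.
Proof. by rewrite (perm_size perm_cols) -cardE cardsU1 x1F hcard addnC. Qed.

Lemma sum_A (G : signed E -> R) : \sum_(a in A) G a = \sum_(i < n) G (nth (szero E) sA i).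
Proof. by rewrite -big_enum -(perm_big _ hsA) (big_nth (szero E)) size_sA big_mkord. Qed.

Lemma sum_cols (H : E -> R) : \sum_(j < n) H (nth x1 cols j) = \sum_(e in x1 |: F) H e.
Proof. by symmetry; rewrite -big_enum -(perm_big _ perm_cols) (big_nth x1) size_cols big_mkord. Qed.

Lemma j0_lt : (index x1 cols < n)%N.
Proof. by rewrite -size_cols index_mem mem_cols setU11. Qed.
Definition j0 : 'I_n := Ordinal j0_lt.

Lemma nth_j0 : nth x1 cols j0 = x1.
Proof. by rewrite /= nth_index // mem_cols setU11. Qed.

Lemma nth_eq_x1 (j : 'I_n) : (nth x1 cols j == x1) = (j == j0).
Proof. by rewrite -{2}nth_j0 nth_uniq ?size_cols ?uniq_cols. Qed.

Lemma nth_cols_in (j : 'I_n) : nth x1 cols j \in x1 |: F.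
Proof. by rewrite -mem_cols mem_nth ?size_cols. Qed.

Lemma idx_F f : f \in F -> exists jf : 'I_n, nth x1 cols jf = f /\ jf != j0.
Proof.
move=> hf; have hc : f \in cols by rewrite mem_cols setU1r.
have lt : (index f cols < n)%N by rewrite -size_cols index_mem.
exists (Ordinal lt); split; first by rewrite /= nth_index.
by rewrite -nth_eq_x1 /= nth_index //; apply: contraTneq hf => ->.
Qed.

Lemma idx_A a : a \in A -> exists i : 'I_n, nth (szero E) sA i = a.
Proof.
move=> ha; have hs : a \in sA by rewrite mem_sA.
have lt : (index a sA < n)%N by rewrite -size_sA index_mem.
by exists (Ordinal lt); rewrite /= nth_index.
Qed.

Definition Smx theta : 'M[R]_n :=
  \matrix_(i, j) hat prec theta (nth (szero E) sA i) (nth x1 cols j).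
Definition Smx' theta : 'M[R]_n :=
  \matrix_(i, j) if nth x1 cols j == x1 then 1
                 else hat prec theta (nth (szero E) sA i) (nth x1 cols j).

Lemma SmxE theta i j : Smx theta i j = hat prec theta (nth (szero E) sA i) (nth x1 cols j).
Proof. by rewrite mxE. Qed.
Lemma Smx'E theta i j : Smx' theta i j = if nth x1 cols j == x1 then 1
                 else hat prec theta (nth (szero E) sA i) (nth x1 cols j).
Proof. by rewrite mxE. Qed.

Definition Wf theta (lam : signed E -> R) e := \sum_(a in A) lam a * hat prec theta a e.

Lemma adj_rel (M : 'M[R]_n) j : \sum_i \adj M j0 i * M i j = (j0 == j)%:R * \det M.
Proof.
have := congr1 (fun X : 'M[R]_n => X j0 j) (mul_adj_mx M); rewrite !mxE => ->.
by rewrite mulr_natl.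
Qed.

Variables (theta : E -> R) (lam : signed E -> R).
Hypotheses (lpos : forall a, a \in A -> 0 < lam a)
  (ldep : forall f, f \in F -> \sum_(a in A) lam a * hat prec theta a f = 0)
  (luniq : forall mu : signed E -> R,
          (forall f, f \in F -> \sum_(a in A) mu a * hat prec theta a f = 0) ->
          exists t : R, forall a, a \in A -> mu a = t * lam a).

Lemma sumlam_gt0 : 0 < \sum_(a in A) lam a.
Proof.
have : (0 < #|A|)%N by rewrite hcard addn1.
case/card_gt0P => a0 ha0; rewrite (bigD1 a0) //=.
apply: (@lt_le_trans _ _ (lam a0)); first exact: lpos.
rewrite lerDl; apply: sumr_ge0 => a /andP[ha _]; exact/ltW/lpos.
Qed.

Lemma mu_dep (c : 'I_n -> R) :
  (forall f, f \in F -> \sum_i c i * hat prec theta (nth (szero E) sA i) f = 0) ->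
  exists t, forall i, c i = t * lam (nth (szero E) sA i).
Proof.
move=> hc.
pose mu := fun a : signed E => \sum_(i < n) (nth (szero E) sA i == a)%:R * c i.
have muN : forall i : 'I_n, mu (nth (szero E) sA i) = c i.
  move=> i; rewrite /mu (bigD1 i) //= eqxx mul1r big1 ?addr0 // => k nki.
  rewrite nth_uniq ?size_sA ?uniq_sA //.
  have -> : (nat_of_ord k == nat_of_ord i) = false by apply/negbTE.
  by rewrite mul0r.
have hmu : forall f, f \in F -> \sum_(a in A) mu a * hat prec theta a f = 0.
  by move=> f hf; rewrite sum_A; under eq_bigr do rewrite muN; exact: hc.
have [t ht] := luniq hmu.
exists t => i; by rewrite -muN ht // -mem_sA mem_nth // size_sA ltn_ord.
Qed.


Lemma adj_eq i : \adj (Smx' theta) j0 i = \adj (Smx theta) j0 i.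
Proof.
rewrite !mxE /cofactor; congr (_ * \det _); apply/matrixP => k l; rewrite !mxE.
by rewrite nth_eq_x1 eq_sym (negbTE (neq_lift j0 l)).
Qed.

Lemma key_t : exists t, \det (Smx theta) = t * Wf theta lam x1 /\
  \det (Smx' theta) = t * \sum_(a in A) lam a.
Proof.
pose c := fun i => \adj (Smx theta) j0 i.
have [|t ht] := @mu_dep c.
  move=> f hf; have [jf [hjf njf]] := idx_F hf.
  transitivity (\sum_i \adj (Smx theta) j0 i * Smx theta i jf).
    by apply: eq_bigr => i _; rewrite /c SmxE hjf.
  by rewrite adj_rel eq_sym (negbTE njf) mul0r.
exists t; split.
  have := adj_rel (Smx theta) j0; rewrite eqxx mul1r => <-.
  rewrite /Wf sum_A big_distrr /=; apply: eq_bigr => i _.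
  by rewrite -/(c i) ht SmxE nth_j0 mulrA.
have := adj_rel (Smx' theta) j0; rewrite eqxx mul1r => <-.
rewrite sum_A big_distrr /=; apply: eq_bigr => i _.
by rewrite adj_eq -/(c i) ht Smx'E nth_j0 eqxx mulr1.
Qed.

Lemma detS'_neq0 : \det (Smx' theta) != 0.
Proof.
apply/negP => /det0P [v nv hv].
have hj : forall j, \sum_i v 0 i * Smx' theta i j = 0.
  move=> j; have := congr1 (fun X : 'rV[R]_n => X 0 j) hv; rewrite !mxE => ->; by [].
have [|t ht] := @mu_dep (fun i => v 0 i).
  move=> f hf; have [jf [hjf njf]] := idx_F hf.
  rewrite -[RHS](hj jf); apply: eq_bigr => i _; rewrite Smx'E hjf.
  by rewrite -hjf nth_eq_x1 (negbTE njf).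
have h0 := hj j0.
have : t * \sum_(a in A) lam a = 0.
  rewrite -[RHS]h0 sum_A big_distrr /=; apply: eq_bigr => i _.
  by rewrite ht Smx'E nth_j0 eqxx mulr1.
move/eqP; rewrite mulf_eq0 (gt_eqF sumlam_gt0) orbF => /eqP t0.
case/negP: nv; apply/eqP/matrixP => k i; rewrite (ord1 k) !mxE ht t0 mul0r.
by [].
Qed.

Lemma sg_rel : Num.sg (\det (Smx theta)) = Num.sg (\det (Smx' theta)) * Num.sg (Wf theta lam x1).
Proof.
have [t [h1 h2]] := key_t.
by rewrite h1 h2 !sgrM (gtr0_sg sumlam_gt0) mulr1.
Qed.

Lemma dot_exch (r : E -> R) :
  \sum_(a in A) lam a * dotE (hat prec theta a) r = \sum_e Wf theta lam e * r e.
Proof.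
rewrite /dotE /Wf; under eq_bigr do rewrite big_distrr /=.
rewrite exchange_big /=; apply: eq_bigr => e _; rewrite big_distrl /=.
by apply: eq_bigr => a _; rewrite mulrA.
Qed.

Lemma solve (rho : E -> R) : (forall e, e \in F -> rho e = 0) ->
  0 < \sum_e Wf theta lam e * rho e ->
  exists r : E -> R, (forall e, e \notin F -> r e = rho e) /\
    (forall a, a \in A -> 0 < dotE (hat prec theta a) r).
Proof.
move=> hrF hpos.
have uS : Smx' theta \in unitmx by rewrite unitmxE unitfE detS'_neq0.
pose d : 'cV[R]_n := \col_i dotE (hat prec theta (nth (szero E) sA i)) rho.
pose z := invmx (Smx' theta) *m (- d).
have hz : Smx' theta *m z = - d by rewrite /z mulKVmx.
pose kap := \sum_(j < n) (nth x1 cols j == x1)%:R * z j 0.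
pose r := fun e => rho e + \sum_(j < n) ((nth x1 cols j == e) && (e != x1))%:R * z j 0.
have hr : forall e, e \notin F -> r e = rho e.
  move=> e he; rewrite /r big1 ?addr0 // => j _.
  case: (eqVneq (nth x1 cols j) e) => [hje | hne] /=; last by rewrite mul0r.
  have := nth_cols_in j; rewrite hje !inE (negbTE he) orbF => ->; by rewrite mul0r.
have hrow : forall i : 'I_n, dotE (hat prec theta (nth (szero E) sA i)) r = - kap.
  move=> i.
  have hzi := congr1 (fun X : 'cV[R]_n => X i 0) hz; simpl in hzi; rewrite !mxE in hzi.
  set a := nth (szero E) sA i in hzi *.
  set X := \sum_(j < n) z j 0 * ((nth x1 cols j != x1)%:R * hat prec theta a (nth x1 cols j)).
  have e1 : dotE (hat prec theta a) r = dotE (hat prec theta a) rho + X.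
    rewrite /dotE /r; under eq_bigr do rewrite mulrDr; rewrite big_split /=; congr (_ + _).
    under eq_bigr do rewrite big_distrr /=; rewrite exchange_big /=; apply: eq_bigr => j _.
    rewrite (bigD1 (nth x1 cols j)) //= eqxx /= big1 ?addr0.
      ring.
    by move=> e ne; rewrite eq_sym (negbTE ne) /= mul0r mulr0.
  have e2 : \sum_j Smx' theta i j * z j 0 = kap + X.
    rewrite /kap /X -big_split /=; apply: eq_bigr => j _; rewrite Smx'E.
    case: (nth x1 cols j == x1) => /=; ring.
  move: hzi; rewrite e2 e1 => hzi; lra.
have hk : 0 < - kap.
  have := dot_exch r; rewrite sum_A.
  under eq_bigr do rewrite hrow.
  have -> : \sum_e Wf theta lam e * r e = \sum_e Wf theta lam e * rho e.
    apply: eq_bigr => e _; case: (boolP (e \in F)) => he.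
      by rewrite /Wf ldep // !mul0r.
    by rewrite hr.
  move=> h; rewrite -h -big_distrl /= in hpos.
  rewrite mulrC in hpos; rewrite -(pmulr_rgt0 _ (sumlam_gt0)) /=.
  by rewrite mulrC sum_A.
exists r; split => // a ha; have [i <-] := idx_A ha; by rewrite hrow.
Qed.

End Lin.

From mathcomp Require Import boolp classical_sets topology normedtype.
Import numFieldNormedType.Exports.

Section Cont.
Variable R : realType.
Definition cont (f : R -> R) := continuous f.

Lemma cont_cst c : cont (fun _ => c).
Proof. exact: cst_continuous. Qed.
Lemma cont_id : cont (fun u => u).
Proof. by move=> x; apply: cvg_id. Qed.
Lemma cont_add f g : cont f -> cont g -> cont (fun u => f u + g u).
Proof. by move=> hf hg x; apply: continuousD; [exact: hf | exact: hg]. Qed.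
Lemma cont_mul f g : cont f -> cont g -> cont (fun u => f u * g u).
Proof. by move=> hf hg x; apply: continuousM; [exact: hf | exact: hg]. Qed.
Lemma cont_opp f : cont f -> cont (fun u => - f u).
Proof. by move=> hf x; apply: continuousN; exact: hf. Qed.
Lemma cont_sin f : cont f -> cont (fun u => sin (f u)).
Proof.
move=> hf x; apply: (continuous_comp (hf x)); exact: continuous_sin.
Qed.

Lemma cont_sum (I : Type) (r : seq I) (P : pred I) (Fi : I -> R -> R) :
  (forall i, cont (Fi i)) -> cont (fun u => \sum_(i <- r | P i) Fi i u).
Proof.
move=> hF; elim: r => [|i r IH].
  by under eq_fun do rewrite big_nil; exact: cont_cst.
under eq_fun do rewrite big_cons.
case: (P i); last exact: IH.
exact: cont_add.
Qed.

Lemma cont_prod (I : Type) (r : seq I) (P : pred I) (Fi : I -> R -> R) :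
  (forall i, cont (Fi i)) -> cont (fun u => \prod_(i <- r | P i) Fi i u).
Proof.
move=> hF; elim: r => [|i r IH].
  by under eq_fun do rewrite big_nil; exact: cont_cst.
under eq_fun do rewrite big_cons.
case: (P i); last exact: IH.
exact: cont_mul.
Qed.

Lemma cont_det n (g : 'I_n -> 'I_n -> R -> R) :
  (forall i j, cont (g i j)) -> cont (fun u => \det (\matrix_(i, j) g i j u)).
Proof.
move=> hg.
under eq_fun do rewrite /determinant.
apply: cont_sum => s.
apply: cont_mul; first exact: cont_cst.
under eq_fun do under eq_bigr do rewrite mxE.
by apply: cont_prod.
Qed.

End Cont.

Section Pos.
Variable R : realType.
Lemma sind_pos (x : R) : 0 < x < 180%:R -> 0 < sind x.
Proof.
move=> /andP[h0 h1]; apply: sin_gt0_pi; apply/andP; split.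
  by rewrite divr_gt0 ?mulr_gt0 ?pi_gt0 ?ltr0n.
rewrite ltr_pdivrMr ?ltr0n // mulrC ltr_pM2l ?pi_gt0 //.
Qed.
End Pos.

Lemma hat_ker (R : realType) (E : finType) (prec : rel E) (theta : E -> R) a (g : E -> R) :
  strict_porder prec -> circuit_po prec a ->
  (forall p q r, \sum_e Kv theta p q r e * g e = 0) ->
  \sum_e hat prec theta a e * g e = 0.
Proof.
move=> sp ca hK; have [p [q [r [hpq hqr ha]]]] := circ_struct sp ca.
have [irr tr] := sp.
case: ha => ->.
  by under eq_bigr do rewrite (hat_circ sp _ _ hpq hqr); apply: hK.
have -> : ([set q], [set p; r]) = sopp ([set p; r], [set q]) by [].
have dis : [disjoint [set p; r] & [set q]].
  rewrite finset.disjoints_subset; apply/fintype.subsetP => x; rewrite !inE => /orP[]/eqP ->.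
    by apply: contraTneq hpq => ->; rewrite irr.
  by apply: contraTneq hqr => ->; rewrite irr.
have ho := fun e => @hat_opp R E prec theta ([set p; r], [set q]) e dis.
under eq_bigr do rewrite ho (hat_circ sp _ _ hpq hqr) mulNr.
by rewrite sumrN hK oppr0.
Qed.

Section MainSec.
Variables (R : realType) (E : finType) (prec : rel E) (A : {set signed E})
  (F : {set E}) (x1 x2 x3 : E) (sA : seq (signed E)) (sE : seq E).
Hypotheses (sp : strict_porder prec) (hcirc : forall a, a \in A -> circuit_po prec a)
  (hsimp : simplicial R prec A F)
  (x1F : x1 \notin F) (x2F : x2 \notin F) (x3F : x3 \notin F)
  (n12 : x1 != x2) (n23 : x2 != x3) (n13 : x1 != x3)
  (cover : F :|: [set x1; x2; x3] = [set: E])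
  (p12 : prec x1 x2) (p23 : prec x2 x3)
  (hsA : perm_eq sA (enum A)) (hsE : perm_eq sE (enum E)).

Definition C0 : signed E := ([set x1; x3], [set x2]).

Lemma notx e : e != x1 -> e != x2 -> e != x3 -> e \in F.
Proof.
move=> h1 h2 h3; have : e \in [set: E] by rewrite inE.
by rewrite -cover !inE (negbTE h1) (negbTE h2) (negbTE h3) !orbF.
Qed.

Lemma KvF (theta : E -> R) e : e \in F -> Kv theta x1 x2 x3 e = 0.
Proof.
move=> he; have f1 : (e == x1) = false by apply: contraTF he => /eqP ->.
have f2 : (e == x2) = false by apply: contraTF he => /eqP ->.
have f3 : (e == x3) = false by apply: contraTF he => /eqP ->.
by rewrite /Kv f1 f2 f3 !mul0r subrr addr0.
Qed.

Lemma per_theta (theta : E -> R) : respects prec theta -> exists W1 : R,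
  [/\ Num.sg (subdet prec theta A sA sE F x1) =
        Num.sg (\det (Smx' prec A F x1 sA sE theta)) * Num.sg W1,
      \det (Smx' prec A F x1 sA sE theta) != 0,
      (soluble prec theta A C0 <-> 0 < W1) &
      (soluble prec theta A (sopp C0) <-> W1 < 0)].
Proof.
move=> hth; have [hcard [lam [lpos ldep luniq]]] := hsimp hth.
have [irr tr] := sp; have p13 := tr _ _ _ p12 p23.
set W := Wf prec A theta lam.
exists (W x1).
have W0 : forall e, e != x1 -> e != x2 -> e != x3 -> W e = 0.
  by move=> e h1 h2 h3; apply: ldep; apply: notx.
have hker : forall g : E -> R, (forall p q r, \sum_e Kv theta p q r e * g e = 0) ->
    \sum_e W e * g e = 0.
  move=> g hg; rewrite -dot_exch big1 // => a ha.
  by rewrite /dotE (hat_ker _ (hcirc ha) hg) // mulr0.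
have hcos := hker _ (Kv_cos theta).
have hsin := hker _ (Kv_sin theta).
have [r2 r3] := Wrel n12 n23 n13 W0 hcos hsin.
have [hb hm] := hth.
have kpos : forall e f, prec e f -> 0 < sind (theta f - theta e).
  move=> e f pef; apply: sind_pos; rewrite subr_gt0 (hm _ _ pef) /=.
  have := hb e; have := hb f; move=> /andP[_ hf] /andP[he _]; lra.
set k1 := sind (theta x3 - theta x2) in r2 r3 *.
set k2 := sind (theta x3 - theta x1) in r2 r3 *.
set k3 := sind (theta x2 - theta x1) in r2 r3 *.
have k1p : 0 < k1 by apply: kpos.
have k2p : 0 < k2 by apply: kpos.
have k3p : 0 < k3 by apply: kpos.
have f1 : (x1 == x2) = false by apply/negbTE.
have f2 : (x2 == x3) = false by apply/negbTE.
have f3 : (x1 == x3) = false by apply/negbTE.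
have f4 : (x2 == x1) = false by rewrite eq_sym.
have f5 : (x3 == x2) = false by rewrite eq_sym.
have f6 : (x3 == x1) = false by rewrite eq_sym.
have K1 : Kv theta x1 x2 x3 x1 = k1 by rewrite /Kv /k1 /k2 /k3 eqxx f1 f3 /=; ring.
have K2 : Kv theta x1 x2 x3 x2 = - k2 by rewrite /Kv /k1 /k2 /k3 eqxx f4 f2 /=; ring.
have K3 : Kv theta x1 x2 x3 x3 = k3 by rewrite /Kv /k1 /k2 /k3 eqxx f6 f5 /=; ring.
have hC : forall e, hat prec theta C0 e = Kv theta x1 x2 x3 e.
  by move=> e; apply: hat_circ.
have dis : [disjoint C0.1 & C0.2].
  rewrite finset.disjoints_subset; apply/fintype.subsetP => x; rewrite !inE.
  by case/orP => /eqP ->; rewrite ?f4 ?f5.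
have hCo : forall e, hat prec theta (sopp C0) e = - Kv theta x1 x2 x3 e.
  by move=> e; rewrite (hat_opp _ _ _ dis) hC.
have sumlam := sumlam_gt0 hcard lpos.
have gen : forall (s : R) (C : signed E), s * s = 1 ->
    (forall e, hat prec theta C e = s * Kv theta x1 x2 x3 e) ->
    (soluble prec theta A C <-> 0 < s * W x1).
  move=> s C ss hCs; split.
    case=> r [hA hCr].
    have hP : 0 < \sum_(a in A) lam a * dotE (hat prec theta a) r.
      have : (0 < #|A|)%N by rewrite hcard addn1.
      case/card_gt0P => a0 ha0; rewrite (bigD1 a0) //=.
      apply: (@lt_le_trans _ _ (lam a0 * dotE (hat prec theta a0) r)).
        by rewrite mulr_gt0 ?lpos ?hA.
      rewrite lerDl; apply: sumr_ge0 => a /andP[ha _].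
      by rewrite mulr_ge0 // ltW ?lpos ?hA.
    rewrite dot_exch (sum_3 _ n12 n23 n13 W0) in hP.
    have hQ : dotE (hat prec theta C) r = s * (k1 * r x1 - k2 * r x2 + k3 * r x3).
      rewrite /dotE; under eq_bigr do rewrite hCs -mulrA.
      by rewrite -big_distrr /= Kv_dot.
    rewrite hQ in hCr.
    have id : (s * W x1) * (s * (k1 * r x1 - k2 * r x2 + k3 * r x3)) =
              k1 * (W x1 * r x1 + W x2 * r x2 + W x3 * r x3).
      transitivity ((s * s) * (W x1 * k1 * r x1 - W x1 * k2 * r x2 + W x1 * k3 * r x3)); first by ring.
      rewrite ss mul1r.
      transitivity (k1 * W x1 * r x1 + (- k2 * W x1) * r x2 + (k3 * W x1) * r x3); first by ring.
      by rewrite -r2 -r3; ring.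
    have : 0 < (s * W x1) * (s * (k1 * r x1 - k2 * r x2 + k3 * r x3)).
      by rewrite id mulr_gt0.
    by rewrite pmulr_lgt0.
  move=> hsW.
  pose rho := fun e => s * Kv theta x1 x2 x3 e.
  have rhoF : forall e, e \in F -> rho e = 0 by move=> e he; rewrite /rho KvF // mulr0.
  have hpos : 0 < \sum_e W e * rho e.
    rewrite (sum_3 _ n12 n23 n13 W0) /rho K1 K2 K3.
    have : 0 < k1 * (W x1 * (s * k1) + W x2 * (s * - k2) + W x3 * (s * k3)).
      have -> : k1 * (W x1 * (s * k1) + W x2 * (s * - k2) + W x3 * (s * k3)) =
          s * (k1 * k1 * W x1 - k2 * (k1 * W x2) + k3 * (k1 * W x3)) by ring.
      rewrite r2 r3.
      have -> : s * (k1 * k1 * W x1 - k2 * (- k2 * W x1) + k3 * (k3 * W x1)) =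
          (s * W x1) * (k1 * k1 + k2 * k2 + k3 * k3) by ring.
      by rewrite mulr_gt0 // !addr_gt0 // mulr_gt0.
    by rewrite pmulr_rgt0.
  have [r [hr hA]] := solve hsA hsE x1F hcard lpos ldep luniq rhoF hpos.
  exists r; split => //.
  have -> : dotE (hat prec theta C) r = \sum_e rho e * rho e.
    apply: eq_bigr => e _; rewrite hCs; case: (boolP (e \in F)) => he.
      by rewrite /rho KvF // !mulr0 mul0r.
    by rewrite hr.
  rewrite /rho; under eq_bigr do rewrite -mulrA.
  rewrite -big_distrr /= Kv_dot -/k1 -/k2 -/k3 K1 K2 K3.
  have -> : s * (k1 * (s * k1) - k2 * (s * - k2) + k3 * (s * k3)) =
     (s * s) * (k1 * k1 + k2 * k2 + k3 * k3) by ring.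
  by rewrite ss mul1r !addr_gt0 // mulr_gt0.
split.
- exact: (sg_rel hsA hsE x1F hcard lpos luniq).
- exact: (detS'_neq0 hsA hsE x1F hcard lpos luniq).
- by rewrite (gen 1 C0) ?mul1r // => e; rewrite hC mul1r.
- have h : soluble prec theta A (sopp C0) <-> 0 < -1 * W x1.
    apply: gen; first by rewrite mulrNN mul1r.
    by move=> e; rewrite hCo mulN1r.
  by rewrite mulN1r oppr_gt0 in h.
Qed.

End MainSec.

Definition segt (R : realType) (E : finType) (th0 th : E -> R) (u : R) : E -> R :=
  fun e => th0 e + u * (th e - th0 e).

Lemma cont_lin (R : realType) (a b : R) : cont (fun u => a + u * b).
Proof. apply: (cont_add (f := fun _ => a) (g := fun u => u * b)); first exact: cont_cst. apply: (cont_mul (f := fun u => u) (g := fun _ => b)); [exact: cont_id | exact: cont_cst]. Qed.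

Lemma cont_sind (R : realType) (a b c d : R) :
  cont (fun u => sind ((a + u * b) - (c + u * d))).
Proof.
rewrite /sind; apply: (cont_sin (f := fun u => (a + u * b - (c + u * d)) * pi / 180%:R)).
apply: (cont_mul (f := fun u => (a + u * b - (c + u * d)) * pi)); last exact: cont_cst.
apply: (cont_mul (f := fun u => (a + u * b - (c + u * d)))); last exact: cont_cst.
apply: (cont_add (f := fun u => a + u * b) (g := fun u => - (c + u * d))); first exact: cont_lin.
apply: (cont_opp (f := fun u => c + u * d)); exact: cont_lin.
Qed.

Lemma cont_hat (R : realType) (E : finType) (prec : rel E) (th0 th : E -> R) c e :
  cont (fun u => hat prec (segt th0 th u) c e).
Proof.
rewrite /hat; case: (e \in supp c); last exact: cont_cst.
apply: (cont_mul (f := fun _ => Defs.sval R c e)); first exact: cont_cst.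
apply: (cont_sum (Fi := fun f u => \sum_(g in supp c :\ e | prec f g)
   sind (segt th0 th u g - segt th0 th u f))) => f.
apply: (cont_sum (Fi := fun g u => sind (segt th0 th u g - segt th0 th u f))) => g.
exact: cont_sind.
Qed.

Lemma conv_gt (R : realType) (m a b u : R) : 0 <= u <= 1 -> m < a -> m < b ->
  m < a + u * (b - a).
Proof.
move=> /andP[u0 u1] ha hb; case: (lerP a b) => h.
  have hba : 0 <= b - a by rewrite subr_ge0.
  have := mulr_ge0 u0 hba; lra.
have e : a + u * (b - a) = b + (1 - u) * (a - b) by ring.
have h1 : 0 <= 1 - u by rewrite subr_ge0.
have h2 : 0 <= a - b by rewrite subr_ge0 ltW.
rewrite e; have := mulr_ge0 h1 h2; lra.
Qed.

Lemma conv_lt (R : realType) (m a b u : R) : 0 <= u <= 1 -> a < m -> b < m ->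
  a + u * (b - a) < m.
Proof.
move=> hu ha hb; have h := @conv_gt R (-m) (-a) (-b) u hu.
have e : - a + u * (- b - - a) = - (a + u * (b - a)) by ring.
rewrite e !ltrN2 in h; exact: h.
Qed.

Lemma sg_pm (R : realType) (d w : R) : d != 0 ->
  (Num.sg d * Num.sg w = Num.sg d <-> 0 < w) /\
  (Num.sg d * Num.sg w = - Num.sg d <-> w < 0).
Proof.
move=> nd.
have [hd | hd] : Num.sg d = 1 \/ Num.sg d = -1.
  case: (ltrgtP d 0) => h; [by right; rewrite ltr0_sg | by left; rewrite gtr0_sg |].
  by rewrite h eqxx in nd.
all: rewrite hd; case: (ltrgtP w 0) => h;
  rewrite ?(ltr0_sg h) ?(gtr0_sg h) ?h ?sgr0; split; split => H; lra.
Qed.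

Theorem theoremt (R : realType) (V E : finType) (tail head : E -> V)
    (prec : rel E) (A : {set signed E}) (part : signed E -> V)
    (F : {set E}) (x1 x2 x3 : E)
    (sA : seq (signed E)) (sE : seq E) :
  twisted_graph tail head prec A part ->
  simplicial R prec A F ->
  x1 \notin F -> x2 \notin F -> x3 \notin F ->
  x1 != x2 -> x2 != x3 -> x1 != x3 ->
  F :|: [set x1; x2; x3] = [set: E] ->
  prec x1 x2 -> prec x2 x3 ->
  perm_eq sA (enum A) -> perm_eq sE (enum E) ->
  let C0 : signed E := ([set x1; x3], [set x2]) in
  exists sigma : R, (sigma = 1 \/ sigma = -1) /\
    forall theta : E -> R, respects prec theta ->
      (soluble prec theta A C0 <->
         Num.sg (subdet prec theta A sA sE F x1) = sigma) /\
      (soluble prec theta A (sopp C0) <->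
         Num.sg (subdet prec theta A sA sE F x1) = - sigma).
Proof.
move=> [[dg sp] _ hcirc _ _] hsimp x1F x2F x3F n12 n23 n13 cover p12 p23 hsA hsE C0.
have PT := per_theta sp hcirc hsimp x1F x2F x3F n12 n23 n13 cover p12 p23 hsA hsE.
case: (pselect (exists th : E -> R, respects prec th)) => [[th0 hth0] | nth]; last first.
  exists 1; split; first by left.
  by move=> th hth; case: nth; exists th.
pose Dp := fun th : E -> R => \det (Smx' prec A F x1 sA sE th).
have [W0 [_ nz0' _ _]] := PT th0 hth0.
have nz0 : Dp th0 != 0 := nz0'.
exists (Num.sg (Dp th0)); split.
  case: (ltrgtP (Dp th0) 0) => h; [by right; rewrite ltr0_sg | by left; rewrite gtr0_sg |].
  by rewrite h eqxx in nz0.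
move=> th hth.
have [W [hsg nz' hs1 hs2]] := PT th hth.
have nz : Dp th != 0 := nz'.
have hresp : forall u : R, 0 <= u <= 1 -> respects prec (segt th0 th u).
  move=> u hu; have [hb0 hm0] := hth0; have [hb hm] := hth; split.
    move=> e; rewrite /segt; have := hb0 e; have := hb e.
    move=> /andP[a1 a2] /andP[b1 b2]; apply/andP; split.
      exact: conv_gt.
    exact: conv_lt.
  move=> e f pef; rewrite /segt; have := hm0 _ _ pef; have := hm _ _ pef => a1 b1.
  rewrite -subr_gt0.
  have -> : th0 f + u * (th f - th0 f) - (th0 e + u * (th e - th0 e)) =
    (th0 f - th0 e) + u * ((th f - th e) - (th0 f - th0 e)) by ring.
  by apply: conv_gt; rewrite // subr_gt0.
have hconst : Num.sg (Dp th) = Num.sg (Dp th0).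
  apply/eqP; apply/negPn/negP => hne.
  pose f := fun u => Dp (segt th0 th u).
  have hf0 : f 0 = Dp th0.
    by rewrite /f; congr Dp; apply/funext => e; rewrite /segt mul0r addr0.
  have hf1 : f 1 = Dp th.
    by rewrite /f; congr Dp; apply/funext => e; rewrite /segt mul1r addrC subrK.
  have fc : cont f.
    rewrite /f /Dp /Smx'. 
    apply: (cont_det (g := fun i j u => if nth x1 (cols F x1 sE) j == x1 then 1
        else hat prec (segt th0 th u) (nth (szero E) sA i) (nth x1 (cols F x1 sE) j))).
    move=> i j; case: (nth x1 (cols F x1 sE) j == x1); [exact: cont_cst | exact: cont_hat].
  have [c hc fc0] : exists2 c, c \in `[0, 1] & f c = 0.
    apply: IVT; first exact: ler01.
      exact: continuous_subspaceT.
    rewrite hf0 hf1.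
    have hs : (Dp th0 < 0 /\ 0 < Dp th) \/ (0 < Dp th0 /\ Dp th < 0).
      move: hne nz0 nz.
      case: (ltrgtP (Dp th0) 0) => h0; case: (ltrgtP (Dp th) 0) => h1;
        rewrite ?(ltr0_sg h0) ?(gtr0_sg h0) ?(ltr0_sg h1) ?(gtr0_sg h1) ?h0 ?h1 ?eqxx //;
        by [left | right].
    case: hs => [[a b] | [a b]]; apply/andP; split.
    - by rewrite ge_min (ltW a).
    - by rewrite le_max (ltW b) orbT.
    - by rewrite ge_min (ltW b) orbT.
    - by rewrite le_max (ltW a).
  move: hc; rewrite in_itv /= => hc.
  have [Wc [_ nzc _ _]] := PT _ (hresp c hc).
  by rewrite -/(Dp _) -/(f c) fc0 eqxx in nzc.
have [S1 S2] := sg_pm W nz0.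
rewrite hsg -/(Dp th) hconst; split.
  exact: (iff_trans hs1 (iff_sym S1)).
exact: (iff_trans hs2 (iff_sym S2)).
Qed.
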